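(* Let $k$ be a positive integer and $C$ be a simplicial complex whose $1$-skeleton has a proper $2k$-colouring. Then $C$ has a proper edge-colouring with $2k-1$ colours.
   Context: An edge-colouring of a simplicial complex $C$ is proper if for every $2$-cell $f$ of $C$, any two distinct edges of $f$ receive distinct colours. *)

(* Defs.v *)
From mathcomp Require Import all_boot.
Set Implicit Arguments. Unset Strict Implicit. Unset Printing Implicit Defensive.

Definition simplicial_complex (V : finType) (C : {set {set V}}) : Prop :=
  (forall s : {set V}, s \in C -> s != set0) /\
  (forall s t : {set V}, s \in C -> t \subset s -> t != set0 -> t \in C).

Definition is_edge (V : finType) (C : {set {set V}}) (e : {set V}) : bool :=
  (e \in C) && (#|e| == 2).
Definition is_2cell (V : finType) (C : {set {set V}}) (f : {set V}) : bool :=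
  (f \in C) && (#|f| == 3).

Definition proper_skeleton_colouring (V : finType) (C : {set {set V}}) (n : nat)
    (c : V -> 'I_n) : Prop :=
  forall e, is_edge C e -> forall x y, x \in e -> y \in e -> x != y -> c x != c y.

Definition proper_edge_colouring (V : finType) (C : {set {set V}}) (m : nat)
    (col : {set V} -> 'I_m) : Prop :=
  forall f, is_2cell C f ->
  forall e1 e2, is_edge C e1 -> is_edge C e2 -> e1 \subset f -> e2 \subset f ->
    e1 != e2 -> col e1 != col e2.

(* Main.v *)
Require Import Defs.
From mathcomp Require Import all_boot zify.
Definition G m a b := (if a == m then 2*b else if b == m then 2*a else a+b) %% m.

Lemma G_sym m a b : G m a b = G m b a.
Proof. rewrite /G; case: (a =P m) => Ha; case: (b =P m) => Hb; subst => //; by rewrite addnC. Qed.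

Lemma G_mod m a b : G m a b %% m = G m a b.
Proof. by rewrite /G modn_mod. Qed.

Lemma half k b : 0 < k -> b %% (2*k-1) = (k * (2*b %% (2*k-1))) %% (2*k-1).
Proof.
move=> k0; rewrite modnMmr mulnA.
have -> : k * 2 = (2*k-1) + 1 by lia.
by rewrite mulnDl mul1n [(_ - _) * b]mulnC modnMDl.
Qed.

Lemma G_inj k a b b' : 0 < k -> a <= 2*k-1 -> b <= 2*k-1 -> b' <= 2*k-1 ->
  a != b -> a != b' -> b != b' -> G (2*k-1) a b != G (2*k-1) a b'.
Proof.
move=> k0 ha hb hb' nab nab' nbb'; apply/negP => /eqP H; move: H; rewrite /G.
set m := 2*k-1.
case: (a =P m) => [Ea|Na].
  move=> H.
  have : b %% m = b' %% m by rewrite (half _ _ k0) H -(half _ _ k0).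
  rewrite !modn_small; first (by move=> E; rewrite E eqxx in nbb'); lia.
case: (b =P m) => [Eb|Nb]; case: (b' =P m) => [Eb'|Nb'].
- by move: nbb'; rewrite Eb Eb' eqxx.
- rewrite mul2n -addnn => /eqP; rewrite eqn_modDl !modn_small; lia.
- rewrite mul2n -addnn => /esym/eqP; rewrite eqn_modDl !modn_small; lia.
- move/eqP; rewrite eqn_modDl !modn_small; lia.
Qed.

Theorem proposition7p1 (k : nat) (V : finType) (C : {set {set V}}) :
  0 < k -> simplicial_complex C ->
  (exists c : V -> 'I_(2 * k), proper_skeleton_colouring C c) ->
  exists col : {set V} -> 'I_(2 * k - 1), proper_edge_colouring C col.
Proof.
move=> k0 [Hne Hcl] [c Hc].
have m0 : 0 < 2 * k - 1 by lia.
pose pc (e : {set V}) : nat := if [pick x in e] is Some x then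
   (if [pick y in e :\ x] is Some y then G (2*k-1) (c x) (c y) else 0) else 0.
have key : forall (e : {set V}) (u v : V), #|e| == 2 -> u \in e -> v \in e -> u != v ->
    pc e = G (2*k-1) (c u) (c v).
  move=> e u v /eqP e2 ue ve uv.
  have Ee : e = [set u; v].
    apply/eqP; rewrite eq_sym eqEcard cards2 uv e2 andbT.
    by apply/subsetP => w; rewrite !inE; case/orP => /eqP ->.
  rewrite /pc; case: pickP => [x xe|none]; last by have := none u; rewrite ue.
  case: pickP => [y|none]; last first.
    move: xe; rewrite Ee !inE => /orP[] /eqP Ex; subst x.
    - by have := none v; rewrite Ee !inE eqxx orbT andbT eq_sym uv.
    - by have := none u; rewrite Ee !inE eqxx andbT uv.
  move: xe; rewrite Ee !inE => /orP[] /eqP Ex; subst x => /andP[yx /orP[] /eqP Ey]; subst y.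
  - by rewrite eqxx in yx.
  - by [].
  - by rewrite G_sym.
  - by rewrite eqxx in yx.
exists (fun e => Ordinal (ltn_pmod (pc e) m0)).
move=> f /andP[fC /eqP f3] e1 e2 /andP[e1C e1c] /andP[e2C e2c] s1 s2 ne.
have : 0 < #|e1 :&: e2|.
  have := cardsUI e1 e2; have : #|e1 :|: e2| <= #|f| by apply: subset_leq_card; rewrite subUset s1 s2.
  move: e1c e2c; rewrite f3 => /eqP -> /eqP ->; lia.
case/card_gt0P => z; rewrite inE => /andP[z1 z2].
have : 0 < #|e1 :\ z| by move: e1c; rewrite (cardsD1 z e1) z1 => /eqP; lia.
case/card_gt0P => x; rewrite !inE => /andP[xz x1].
have : 0 < #|e2 :\ z| by move: e2c; rewrite (cardsD1 z e2) z2 => /eqP; lia.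
case/card_gt0P => y; rewrite !inE => /andP[yz y2].
have Eset : forall (e : {set V}) (w : V), #|e| == 2 -> z \in e -> w \in e -> w != z -> e = [set z; w].
  move=> e w /eqP ec ze we wz; apply/eqP; rewrite eq_sym eqEcard cards2 eq_sym wz ec andbT.
  by apply/subsetP => t; rewrite !inE; case/orP => /eqP ->.
have xy : x != y.
  apply/eqP => Exy; subst y.
  by move: ne; rewrite (Eset e1 x) // (Eset e2 x) // eqxx.
have cxy : c x != c y.
  apply: (Hc [set x; y]) => //; try by rewrite !inE eqxx ?orbT.
  rewrite /is_edge cards2 xy eqxx andbT; apply: (Hcl f) => //.
    by apply/subsetP => t; rewrite !inE; case/orP => /eqP ->; [apply: (subsetP s1) | apply: (subsetP s2)].
  by apply/set0Pn; exists x; rewrite !inE eqxx.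
have czx : c z != c x by apply: (Hc e1) => //; [rewrite /is_edge e1C | rewrite eq_sym].
have czy : c z != c y by apply: (Hc e2) => //; [rewrite /is_edge e2C | rewrite eq_sym].
apply/negP => /eqP /(congr1 val) /=.
rewrite (key e1 z x) ?(key e2 z y) //; try by rewrite eq_sym.
rewrite !G_mod => /eqP; apply/negP.
have bnd : forall u : V, c u <= 2 * k - 1.
  by move=> u; have := ltn_ord (c u); clear; lia.
by apply: (@G_inj k (c z) (c x) (c y) k0).
Qed.
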